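(* Let $\mathfrak{G}$ be a right-angled graph of groups, $\omega$ a vertex and $\mathfrak{X}=\mathfrak{X}(\mathfrak{G},\omega)$. Let $e,f$ be two edges of $\mathfrak{X}$ labelled by factors $A$ and $B$ respectively, where $A$ is a factor of $G_u$ and $B$ a factor of $G_v$. If $e$ and $f$ belong to the same hyperplane, then there exists an oriented path $\gamma$ in the underlying abstract graph of $\mathfrak{G}$ from $u$ to $v$ such that $\varphi_\gamma(A)=B$.
   Context: An abstract graph consists of a set $V$ of vertices, a set $E$ of arrows, a fixed-point-free involution $e\mapsto\bar e$ on $E$, and maps $s,t:E\to V$ with $t(e)=s(\bar e)$; it is assumed connected. A right-angled graph of groups $\mathfrak{G}$ consists of an abstract graph, for each $v\in V$ a group $G_v$ with a fixed decomposition as a graph product $\Gamma_v\mathcal{G}_v$ (over a simplicial graph $\Gamma_v$ with non-trivial vertex-groups), for each $e\in E$ a group $G_e=G_{\bar e}$ with a fixed decomposition as a graph product, and monomorphisms $\iota_e:G_e\hookrightarrow G_{s(e)}$ which are graphical embeddings: there is an embedding $f$ of the graph of $G_e$ onto an induced subgraph of $\Gamma_{s(e)}$ such that $\iota_e$ restricts to an isomorphism from each vertex-group of $G_e$ onto the vertex-group of $G_{s(e)}$ indexed by the image under $f$ of its vertex. The factors of $G_v$ are the vertex-groups of its fixed graph product decomposition. The fundamental groupoid $\mathfrak{F}$ is the groupoid with object set $V$ generated by the arrows $e\in E$ (morphisms from $s(e)$ to $t(e)$) and the elements of each $G_v$ (morphisms from $v$ to $v$), subject to the relations of each $G_v$,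 $\bar e=e^{-1}$, and $\iota_e(g)\cdot e=e\cdot\iota_{\bar e}(g)$ for $e\in E$, $g\in G_e$. Products are written left to right; the terminus of a morphism is its terminal object. The graph $\mathfrak{X}(\mathfrak{G},\omega)$ has as vertices the morphisms of $\mathfrak{F}$ with initial object $\omega$, two vertices $g,h$ being adjacent iff $h=gs$ where $s$ is either an arrow or a non-trivial element of some factor; such an edge is labelled by that arrow or by the factor containing $s$. It is a quasi-median graph. Hyperplanes are equivalence classes of edges for the transitive closure of ''lie in a common triangle or are opposite sides of an induced 4-cycle''. For an arrow $e$ and a factor $A$ of $G_{s(e)}$, set $\varphi_e(A):=\iota_{\bar e}(\iota_e^{-1}(A))$ (a factor of $G_{t(e)}$) if $A\subset\iota_e(G_e)$ and $\varphi_e(A):=\emptyset$ otherwise, with $\varphi_e(\emptyset)=\emptyset$. For an oriented path $\gamma=e_1\cdots e_n$, $\varphi_\gamma:=\varphi_{e_n}\circ\cdots\circ\varphi_{e_1}$. *)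

(* Defs.v *)
From Stdlib Require Import List Relations.
Import ListNotations.

Set Implicit Arguments.

Record grp := Grp {
  car :> Type;
  gmul : car -> car -> car;
  gone : car;
  ginv : car -> car;
  gmulA : forall x y z, gmul x (gmul y z) = gmul (gmul x y) z;
  gmul1g : forall x, gmul gone x = x;
  gmulg1 : forall x, gmul x gone = x;
  gmulVg : forall x, gmul (ginv x) x = gone;
  gmulgV : forall x, gmul x (ginv x) = gone
}.
Arguments gmul {g}.
Arguments gone {g}.
Arguments ginv {g}.

Definition hom {G H : grp} (f : G -> H) : Prop :=
  forall x y, f (gmul x y) = gmul (f x) (f y).

(* ---------- Groups with a fixed graph-product decomposition ----------
   G is the graph product over the simplicial graph (vI, vadj) of the
   non-trivial vertex-groups (fac i), expressed by the universal property
   of the graph product with respect to the inclusions of the factors. *)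
Record gpgroup := GPGroup {
  gg :> grp;
  vI : Type;
  vadj : vI -> vI -> Prop;
  vadj_sym : forall i j, vadj i j -> vadj j i;
  vadj_irr : forall i, ~ vadj i i;
  fac : vI -> gg -> Prop;
  fac_one : forall i, fac i gone;
  fac_mul : forall i a b, fac i a -> fac i b -> fac i (gmul a b);
  fac_inv : forall i a, fac i a -> fac i (ginv a);
  fac_nontriv : forall i, exists a, fac i a /\ a <> gone;
  fac_comm : forall i j a b, vadj i j -> fac i a -> fac j b ->
               gmul a b = gmul b a;
  fac_univ : forall (H : grp) (f : vI -> gg -> H),
      (forall i a b, fac i a -> fac i b -> f i (gmul a b) = gmul (f i a) (f i b)) ->
      (forall i j a b, vadj i j -> fac i a -> fac j b ->
          gmul (f i a) (f j b) = gmul (f j b) (f i a)) ->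
      exists F : gg -> H, hom F /\ (forall i a, fac i a -> F a = f i a) /\
        (forall F' : gg -> H, hom F' -> (forall i a, fac i a -> F' a = f i a) ->
           forall x, F' x = F x)
}.

Definition graphical {H K : gpgroup} (iota : H -> K) : Prop :=
  hom iota /\ (forall x y, iota x = iota y -> x = y) /\
  exists f : vI H -> vI K,
    (forall i j, f i = f j -> i = j) /\
    (forall i j, vadj H i j <-> vadj K (f i) (f j)) /\
    (forall i, (forall a, fac H i a -> fac K (f i) (iota a)) /\
               (forall b, fac K (f i) b -> exists a, fac H i a /\ iota a = b)).

Record RAGoG := MkRAGoG {
  V : Type;
  E : Type;
  bar : E -> E;
  bar_invol : forall e, bar (bar e) = e;
  bar_nofix : forall e, bar e <> e;
  src : E -> V;
  connected : forall u w : V,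
      clos_refl_trans V (fun a b => exists e, src e = a /\ src (bar e) = b) u w;
  Gv : V -> gpgroup;
  Ge : E -> gpgroup;
  Ge_bar : forall e, Ge (bar e) = Ge e;
  iota : forall e, Ge e -> Gv (src e);
  iota_graphical : forall e, graphical (iota e)
}.
Arguments bar {r}.
Arguments src {r}.
Arguments Gv {r}.
Arguments Ge {r}.
Arguments iota {r}.

Definition tgt {G : RAGoG} (e : E G) : V G := src (bar e).

Definition castG (A B : gpgroup) (H : A = B) : A -> B :=
  match H in _ = B' return A -> B' with eq_refl => fun x => x end.

Definition iota_bar {G : RAGoG} (e : E G) : Ge e -> Gv (tgt e) :=
  fun g => iota (bar e) (castG (eq_sym (Ge_bar G e)) g).

Inductive letter (G : RAGoG) :=
| Arr (e : E G)
| Elt (v : V G) (g : Gv v).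
Arguments Arr {G}.
Arguments Elt {G}.

Inductive wpath {G : RAGoG} : V G -> list (letter G) -> V G -> Prop :=
| wnil v : wpath v [] v
| warr e w v : wpath (tgt e) w v -> wpath (src e) (Arr e :: w) v
| welt u (g : Gv u) w v : wpath u w v -> wpath u (Elt u g :: w) v.

Inductive rel_pair {G : RAGoG} : list (letter G) -> list (letter G) -> Prop :=
| rel_mul v (g h : Gv v) : rel_pair [Elt v g; Elt v h] [Elt v (gmul g h)]
| rel_one v : rel_pair [Elt v (@gone (Gv v))] []
| rel_bar e : rel_pair [Arr e; Arr (bar e)] []
| rel_edge e (g : Ge e) :
    rel_pair [Elt (src e) (iota e g); Arr e] [Arr e; Elt (tgt e) (iota_bar e g)].

Definition valid_from {G : RAGoG} (om : V G) (w : list (letter G)) : Prop :=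
  exists v, wpath om w v.

Definition step {G : RAGoG} (om : V G) (w w' : list (letter G)) : Prop :=
  valid_from om w /\ valid_from om w' /\
  exists w1 w2 l r, rel_pair l r /\
    ((w = w1 ++ l ++ w2 /\ w' = w1 ++ r ++ w2) \/
     (w = w1 ++ r ++ w2 /\ w' = w1 ++ l ++ w2)).

(* equality of morphisms of the fundamental groupoid with initial object om *)
Definition geq {G : RAGoG} (om : V G) : relation (list (letter G)) :=
  clos_refl_trans _ (step om).

Definition gen {G : RAGoG} (v : V G) (l : letter G) : Prop :=
  (exists e, l = Arr e /\ src e = v) \/
  (exists i (a : Gv v), l = Elt v a /\ fac (Gv v) i a /\ a <> gone).

Definition adjX {G : RAGoG} (om : V G) (x y : list (letter G)) : Prop :=
  valid_from om y /\
  exists v, wpath om x v /\ exists l, gen v l /\ geq om y (x ++ [l]).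

(* edges of X are (unordered) pairs of adjacent vertices, up to geq *)
Definition edgeX {G : RAGoG} := (list (letter G) * list (letter G))%type.

Definition same_edge {G : RAGoG} (om : V G) (p q : edgeX) : Prop :=
  (geq om (fst p) (fst q) /\ geq om (snd p) (snd q)) \/
  (geq om (fst p) (snd q) /\ geq om (snd p) (fst q)).

Definition labelled_factor {G : RAGoG} (om : V G) (p : edgeX) (u : V G)
    (i : vI (Gv u)) : Prop :=
  let lab (x y : list (letter G)) :=
      wpath om x u /\ valid_from om y /\
      exists a : Gv u, fac (Gv u) i a /\ a <> gone /\ geq om y (x ++ [Elt u a]) in
  lab (fst p) (snd p) \/ lab (snd p) (fst p).

Definition in_triangle_rel {G : RAGoG} (om : V G) (p q : edgeX) : Prop :=
  exists a b c,
    adjX om a b /\ adjX om b c /\ adjX om a c /\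
    ~ geq om a b /\ ~ geq om b c /\ ~ geq om a c /\
    (same_edge om p (a, b) \/ same_edge om p (b, c) \/ same_edge om p (a, c)) /\
    (same_edge om q (a, b) \/ same_edge om q (b, c) \/ same_edge om q (a, c)).

Definition opposite_rel {G : RAGoG} (om : V G) (p q : edgeX) : Prop :=
  exists a b c d,
    adjX om a b /\ adjX om b c /\ adjX om c d /\ adjX om d a /\
    ~ adjX om a c /\ ~ adjX om b d /\
    ~ geq om a b /\ ~ geq om b c /\ ~ geq om c d /\ ~ geq om d a /\
    ~ geq om a c /\ ~ geq om b d /\
    same_edge om p (a, b) /\ same_edge om q (c, d).

Definition is_edgeX {G : RAGoG} (om : V G) (p : edgeX) : Prop :=
  adjX om (fst p) (snd p).

Definition same_hyperplane {G : RAGoG} (om : V G) : relation edgeX :=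
  clos_refl_sym_trans _ (fun p q => is_edgeX om p /\ is_edgeX om q /\
     (same_edge om p q \/ in_triangle_rel om p q \/ opposite_rel om p q)).

(* subsets are predicates; the empty predicate plays the role of the empty set *)
Definition phi_e {G : RAGoG} (e : E G) (P : Gv (src e) -> Prop) : Gv (tgt e) -> Prop :=
  fun y => (forall x, P x -> exists g, iota e g = x) /\
           exists g, P (iota e g) /\ iota_bar e g = y.

Inductive gpath {G : RAGoG} : V G -> V G -> Type :=
| gnil v : gpath v v
| gcons (e : E G) v : gpath (tgt e) v -> gpath (src e) v.

Fixpoint phi_path {G : RAGoG} {u w : V G} (p : gpath u w) :
    (Gv u -> Prop) -> (Gv w -> Prop) :=
  match p in gpath u' w' return (Gv u' -> Prop) -> (Gv w' -> Prop) with
  | gnil _ => fun P => P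
  | gcons e p' => fun P => phi_path p' (phi_e e P)
  end.

(* Main.v *)
Require Import Defs.
From Stdlib Require Import List Relations Classical ClassicalEpsilon ProofIrrelevance Eqdep FunctionalExtensionality PropExtensionality Arith Lia.
Import ListNotations.
Set Implicit Arguments.

Arguments gmulA {g} x y z.
Arguments gmul1g {g} x.
Arguments gmulg1 {g} x.
Arguments gmulVg {g} x.
Arguments gmulgV {g} x.

Section GrpLemmas.
Variable K : grp.
Lemma mul_cancel_l (a x y : K) : gmul a x = gmul a y -> x = y.
Proof. intro H. rewrite <- (gmul1g x), <- (gmul1g y), <- (gmulVg a), <- !gmulA, H. reflexivity. Qed.
Lemma mul_cancel_r (a x y : K) : gmul x a = gmul y a -> x = y.
Proof. intro H. rewrite <- (gmulg1 x), <- (gmulg1 y), <- (gmulgV a), !gmulA, H. reflexivity. Qed.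
Lemma inv_uniq (a b : K) : gmul a b = gone -> b = ginv a.
Proof. intro H. apply (mul_cancel_l a). rewrite H, gmulgV. reflexivity. Qed.
Lemma inv_one : ginv (@gone K) = gone.
Proof. symmetry. apply inv_uniq. apply gmul1g. Qed.
Lemma inv_inv (a : K) : ginv (ginv a) = a.
Proof. symmetry. apply inv_uniq. apply gmulVg. Qed.
Lemma inv_mul (a b : K) : ginv (gmul a b) = gmul (ginv b) (ginv a).
Proof. symmetry. apply inv_uniq. rewrite gmulA, <- (gmulA a b), gmulgV, gmulg1, gmulgV. reflexivity. Qed.
Lemma mul_eq_one_l (a b : K) : gmul a b = gone -> a = ginv b.
Proof. intro H. apply (mul_cancel_r b). rewrite H, gmulVg. reflexivity. Qed.
End GrpLemmas.
Arguments mul_cancel_l {K}.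
Arguments mul_cancel_r {K}.
Arguments inv_uniq {K}.
Arguments inv_one {K}.
Arguments inv_inv {K}.
Arguments inv_mul {K}.
Arguments mul_eq_one_l {K}.

Lemma hom_one (H K : grp) (f : H -> K) : hom f -> f gone = gone.
Proof. intro hf. apply (mul_cancel_l (f gone)). rewrite <- hf, !gmulg1. reflexivity. Qed.
Lemma hom_inv (H K : grp) (f : H -> K) : hom f -> forall x, f (ginv x) = ginv (f x).
Proof. intros hf x. apply inv_uniq. rewrite <- hf, gmulgV. apply hom_one; auto. Qed.

Definition dec (P : Prop) : {P} + {~P} := excluded_middle_informative P.

Section Retract.
Variable K : gpgroup.
Variable i : vI K.
Definition rf (j : vI K) (a : K) : gg K := if dec (j = i) then a else gone.

Lemma retract_ex : exists F : K -> K, hom F /\ (forall a, fac K i a -> F a = a) /\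
   (forall j a, j <> i -> fac K j a -> F a = gone).
Proof.
  destruct (fac_univ K (gg K) rf) as [F [hF [HF _]]].
  - intros j a b _ _. unfold rf. destruct (dec (j = i)); auto. rewrite gmulg1; auto.
  - intros j k a b Hjk Ha Hb. unfold rf.
    destruct (dec (j = i)), (dec (k = i)); subst.
    + exfalso; eapply vadj_irr; eauto.
    + rewrite gmulg1, gmul1g; auto.
    + rewrite gmulg1, gmul1g; auto.
    + rewrite gmulg1; auto.
  - exists F. split; auto. split.
    + intros a Ha. rewrite (HF i a Ha). unfold rf. destruct (dec (i = i)); congruence.
    + intros j a Hj Ha. rewrite (HF j a Ha). unfold rf. destruct (dec (j = i)); congruence.
Qed.
End Retract.

Lemma fac_uniq (K : gpgroup) (i j : vI K) (a : K) :
  fac K i a -> fac K j a -> a <> gone -> i = j.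
Proof.
  intros Hi Hj Ha. destruct (retract_ex K i) as [F [_ [H1 H2]]].
  destruct (classic (j = i)) as [|n]; auto.
  exfalso. apply Ha. rewrite <- (H1 a Hi). apply (H2 j); auto.
Qed.

Lemma fac_tri (K : gpgroup) (i j k : vI K) (a b c : K) :
  fac K i a -> fac K j b -> fac K k c -> a <> gone -> b <> gone -> c <> gone ->
  c = gmul a b -> j = i /\ k = i.
Proof.
  intros Ha Hb Hc na nb nc E.
  destruct (retract_ex K i) as [F [hF [H1 H2]]].
  assert (Fc := f_equal F E). rewrite hF, (H1 a Ha) in Fc.
  destruct (classic (j = i)) as [ji|nji].
  - split; auto. destruct (classic (k = i)) as [|nki]; auto.
    exfalso. subst j. rewrite (H2 k c nki Hc), (H1 b Hb) in Fc. apply nc. rewrite E. auto.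
  - exfalso. rewrite (H2 j b nji Hb), gmulg1 in Fc.
    destruct (classic (k = i)) as [ki|nki].
    + subst k. rewrite (H1 c Hc) in Fc. apply nb. apply (mul_cancel_l a). rewrite gmulg1, <- E. auto.
    + rewrite (H2 k c nki Hc) in Fc. auto.
Qed.

Lemma fac_inv_mem (K : gpgroup) i (a : K) : fac K i a -> fac K i (ginv a).
Proof. apply fac_inv. Qed.

Lemma fac_four (K : gpgroup) (i1 i2 i3 i4 : vI K) (a1 a2 a3 a4 : K) :
  fac K i1 a1 -> fac K i2 a2 -> fac K i3 a3 -> fac K i4 a4 -> a1 <> gone ->
  i2 <> i1 -> i4 <> i1 -> gmul (gmul (gmul a1 a2) a3) a4 = gone -> i3 = i1.
Proof.
  intros H1 H2 H3 H4 n1 n2 n4 E.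
  destruct (retract_ex K i1) as [F [hF [R1 R2]]].
  assert (Fc := f_equal F E). rewrite !hF, (hom_one hF), (R1 _ H1), (R2 _ _ n2 H2), (R2 _ _ n4 H4) in Fc.
  destruct (classic (i3 = i1)) as [|n3]; auto. exfalso.
  rewrite (R2 _ _ n3 H3), !gmulg1 in Fc. auto.
Qed.

Lemma graphical_factor (H K : gpgroup) (i1 : H -> K) (g1 : graphical i1) (A : vI K) (k : H) :
  k <> gone -> fac K A (i1 k) -> exists A', fac H A' k /\
   forall x : K, fac K A x <-> exists y, fac H A' y /\ i1 y = x.
Proof.
  intros nk Hk. destruct g1 as [hom1 [inj1 [f [finj [fadj ffac]]]]].
  assert (Hex : exists A', f A' = A).
  { apply NNPP; intro Hn.
    destruct (retract_ex K A) as [F [hF [R1 R2]]].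
    destruct (fac_univ H (gg K) (fun _ _ => gone)) as [F0 [_ [_ Fu]]].
    - intros; rewrite gmulg1; auto.
    - intros; auto.
    - assert (E1 : forall x, (fun y => F (i1 y)) x = F0 x).
      { apply Fu. intros a b. simpl. rewrite hom1, hF. auto.
        intros j a Ha. apply (R2 (f j)). intro e. apply Hn. eauto. apply ffac; auto. }
      assert (E2 : forall x, (fun _ : H => @gone K) x = F0 x).
      { apply Fu. intros a b. simpl. rewrite gmulg1; auto. intros; auto. }
      assert (E := E1 k). rewrite <- E2 in E. simpl in E. rewrite (R1 _ Hk) in E.
      apply nk. apply inj1. rewrite E. symmetry. apply hom_one; auto. }
  destruct Hex as [A' eA]. subst A.
  exists A'. split.
  - destruct (proj2 (ffac A') (i1 k) Hk) as [a [Ha Ea]]. apply inj1 in Ea. subst; auto.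
  - intro x. split.
    + intro Hx. apply (proj2 (ffac A') x Hx).
    + intros [y [Hy Ey]]. subst. apply (proj1 (ffac A')); auto.
Qed.


Lemma castG_mul (A B : gpgroup) (H : A = B) (x y : A) :
  castG H (gmul x y) = gmul (castG H x) (castG H y).
Proof. destruct H. reflexivity. Qed.
Lemma castG_refl (A : gpgroup) (H : A = A) (x : A) : castG H x = x.
Proof. rewrite (UIP_refl _ _ H). reflexivity. Qed.
Lemma castG_trans (A B C : gpgroup) (H1 : A = B) (H2 : B = C) (x : A) :
  castG H2 (castG H1 x) = castG (eq_trans H1 H2) x.
Proof. destruct H1, H2. reflexivity. Qed.
Lemma castG_inj (A B : gpgroup) (H : A = B) (x y : A) : castG H x = castG H y -> x = y.
Proof. destruct H. auto. Qed.

Notation GV G v := (car (gg (@Gv G v))).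

Section NF.
Variable G : RAGoG.

Definition castGv {w w' : V G} (H : w = w') (g : GV G w) : GV G w' :=
  eq_rect w (fun v => GV G v) g w' H.
Lemma castGv_refl w (H : w = w) g : castGv H g = g.
Proof. rewrite (UIP_refl _ _ H). reflexivity. Qed.

Lemma iota_hom (e : E G) : hom (iota e).
Proof. destruct (iota_graphical G e) as [h _]. exact h. Qed.
Lemma iota_inj (e : E G) x y : iota e x = iota e y -> x = y.
Proof. destruct (iota_graphical G e) as [_ [h _]]. exact (h x y). Qed.
Lemma iota_bar_hom (e : E G) : hom (iota_bar e).
Proof. intros x y. unfold iota_bar. rewrite castG_mul. apply iota_hom. Qed.
Lemma iota_bar_inj (e : E G) x y : iota_bar e x = iota_bar e y -> x = y.
Proof. unfold iota_bar. intro H. apply iota_inj in H. apply castG_inj in H. auto. Qed.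

Definition inim (e : E G) (x : GV G (src e)) := exists h, x = iota e h.
Definition coset (e : E G) (x : GV G (src e)) : GV G (src e) -> Prop :=
  fun y => exists h, y = gmul x (iota e h).
Definition rep (e : E G) (x : GV G (src e)) : GV G (src e) :=
  if dec (inim e x) then gone else epsilon (inhabits gone) (coset e x).
Definition hp (e : E G) (x : GV G (src e)) : Ge e :=
  epsilon (inhabits gone) (fun h => x = gmul (rep e x) (iota e h)).

Lemma rep_in_coset e x : exists k, rep e x = gmul x (iota e k).
Proof.
  unfold rep. destruct (dec (inim e x)) as [[h Hh]|n].
  - exists (ginv h). rewrite (hom_inv (iota_hom e)), Hh, gmulgV. reflexivity.
  - apply (epsilon_spec (inhabits gone) (coset e x)). exists x. exists gone.
    rewrite (hom_one (iota_hom e)), gmulg1. reflexivity.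
Qed.

Lemma rep_spec e x : x = gmul (rep e x) (iota e (hp e x)).
Proof.
  unfold hp. apply (epsilon_spec (inhabits gone) (fun h => x = gmul (rep e x) (iota e h))).
  destruct (rep_in_coset e x) as [k Hk]. exists (ginv k).
  rewrite Hk, (hom_inv (iota_hom e)), <- gmulA, gmulgV, gmulg1. reflexivity.
Qed.

Lemma inim_mul_r e x k : inim e (gmul x (iota e k)) <-> inim e x.
Proof.
  split; intros [h Hh].
  - exists (gmul h (ginv k)). rewrite (iota_hom e), <- Hh, (hom_inv (iota_hom e)), <- gmulA, gmulgV, gmulg1. auto.
  - exists (gmul h k). rewrite (iota_hom e), Hh. auto.
Qed.

Lemma rep_coset e x k : rep e (gmul x (iota e k)) = rep e x.
Proof.
  unfold rep. destruct (dec (inim e (gmul x (iota e k)))) as [i1|n1];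
  destruct (dec (inim e x)) as [i2|n2].
  - auto.
  - exfalso. apply n2. apply (proj1 (inim_mul_r e x k)); auto.
  - exfalso. apply n1. apply (proj2 (inim_mul_r e x k)); auto.
  - f_equal. apply functional_extensionality. intro y. apply propositional_extensionality.
    unfold coset. split; intros [h Hh].
    + exists (gmul k h). rewrite (iota_hom e), gmulA. auto.
    + exists (gmul (ginv k) h). rewrite (iota_hom e), gmulA, <- (gmulA x), (hom_inv (iota_hom e)), gmulgV, gmulg1. auto.
Qed.

Lemma rep_one_iff e x : rep e x = gone <-> inim e x.
Proof.
  split.
  - intro H. destruct (rep_in_coset e x) as [k Hk]. rewrite H in Hk.
    exists (ginv k). rewrite (hom_inv (iota_hom e)). apply mul_eq_one_l. auto.
  - intro H. unfold rep. destruct (dec (inim e x)); tauto.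
Qed.

Lemma rep_rep e x : rep e (rep e x) = rep e x.
Proof. destruct (rep_in_coset e x) as [k Hk]. rewrite Hk at 1. rewrite rep_coset. auto. Qed.

Lemma hp_uniq e x h : x = gmul (rep e x) (iota e h) -> hp e x = h.
Proof.
  intro H. apply (iota_inj e). apply (mul_cancel_l (rep e x)). rewrite <- H. symmetry. apply rep_spec.
Qed.

Lemma rep_iota e k : rep e (iota e k) = gone.
Proof. apply rep_one_iff. exists k; auto. Qed.
Lemma hp_iota e k : hp e (iota e k) = k.
Proof. apply hp_uniq. rewrite rep_iota, gmul1g. auto. Qed.

Inductive nf : V G -> Type :=
| nend (v : V G) (g : GV G v) : nf v
| ncons (e : E G) (t : GV G (src e)) (r : nf (tgt e)) : nf (src e).

Fixpoint act_elt {u} (r : nf u) : GV G u -> nf u :=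
  match r in nf u0 return GV G u0 -> nf u0 with
  | nend v g' => fun g => nend v (gmul g g')
  | ncons e t rest => fun g =>
      ncons e (rep e (gmul g t)) (act_elt rest (iota_bar e (hp e (gmul g t))))
  end.

Definition head_tb (e : E G) {w} (r : nf w) : Prop :=
  match r with nend _ _ => False | ncons e2 t2 _ => e2 = bar e /\ t2 = gone end.

Fixpoint valid {w} (r : nf w) : Prop :=
  match r with
  | nend _ _ => True
  | ncons e t rest => rep e t = t /\ ~ head_tb e rest /\ valid rest
  end.

Lemma act_elt_mul w (r : nf w) : forall g h, act_elt (act_elt r h) g = act_elt r (gmul g h).
Proof.
  induction r as [v g'|e t rest IH]; intros g h; simpl.
  - rewrite gmulA. auto.
  - rewrite IH, <- (iota_bar_hom e).
    assert (E1 : rep e (gmul g (rep e (gmul h t))) = rep e (gmul (gmul g h) t)).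
    { destruct (rep_in_coset e (gmul h t)) as [k Hk]. rewrite Hk, gmulA, rep_coset, gmulA. auto. }
    assert (E2 : hp e (gmul (gmul g h) t) = gmul (hp e (gmul g (rep e (gmul h t)))) (hp e (gmul h t))).
    { apply hp_uniq. rewrite <- E1, (iota_hom e), gmulA. rewrite <- (rep_spec e (gmul g (rep e (gmul h t)))). rewrite <- (gmulA g (rep e (gmul h t))), <- (rep_spec e (gmul h t)), gmulA. reflexivity. }
    rewrite E1, E2. auto.
Qed.

Lemma act_elt_one w (r : nf w) : valid r -> act_elt r gone = r.
Proof.
  induction r as [v g'|e t rest IH]; simpl; intro Hv.
  - rewrite gmul1g. auto.
  - destruct Hv as [Ht [_ Hr]]. rewrite gmul1g, Ht.
    assert (E : hp e t = gone).
    { apply hp_uniq. rewrite Ht, (hom_one (iota_hom e)), gmulg1. auto. }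
    rewrite E, (hom_one (iota_bar_hom e)), IH; auto.
Qed.

Definition img_bar (e : E G) {w} (g : GV G w) : Prop :=
  exists (H : src (bar e) = w) k, g = castGv H (iota (bar e) k).

Lemma head_tb_act w (r : nf w) (g : GV G w) e :
  valid r -> img_bar e g -> head_tb e (act_elt r g) -> head_tb e r.
Proof.
  destruct r as [v g'|e2 t2 rest]; simpl; auto.
  intros [Hr _] [H [k Hk]] [E2 Ht]. subst e2. rewrite castGv_refl in Hk. subst g.
  split; auto. apply rep_one_iff in Ht. rewrite <- Hr. apply rep_one_iff.
  destruct Ht as [h Hh]. exists (gmul (ginv k) h). rewrite (iota_hom (bar e)), <- Hh, gmulA,
    (hom_inv (iota_hom (bar e))), gmulVg, gmul1g. auto.
Qed.

Lemma valid_act_elt w (r : nf w) : forall g, valid r -> valid (act_elt r g).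
Proof.
  induction r as [v g'|e t rest IH]; simpl; auto.
  intros g [Ht [Hn Hr]]. split; [apply rep_rep|]. split; [|apply IH; auto].
  intro Hh. apply Hn. eapply head_tb_act; eauto.
  exists eq_refl. exists (castG (eq_sym (Ge_bar G e)) (hp e (gmul g t))). reflexivity.
Qed.

End NF.
Arguments castGv {G w w'}.
Arguments rep {G}.
Arguments hp {G}.
Arguments inim {G}.
Arguments coset {G}.
Arguments act_elt {G u}.
Arguments head_tb {G} e {w}.
Arguments valid {G w}.
Arguments img_bar {G} e {w}.
Arguments nend {G}.
Arguments ncons {G}.


Section Act.
Variable G : RAGoG.

Definition NF := {w : V G & nf G w}.
Definition castV {w w' : V G} (H : w = w') (r : nf G w) : nf G w' := eq_rect w (nf G) r w' H.

Definition cancel_check (e : E G) {w} (r : nf G w) : option NF :=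
  match r with
  | nend _ _ => None
  | ncons e2 t2 rest => if dec (e2 = bar e /\ t2 = gone) then Some (existT (nf G) (tgt e2) rest) else None
  end.

Definition act_arr (e : E G) (x : NF) : NF :=
  match cancel_check e (projT2 x) with
  | Some y => y
  | None => match dec (projT1 x = tgt e) with
            | left H => existT (nf G) (src e) (ncons e gone (castV H (projT2 x)))
            | right _ => x end
  end.

Definition act (l : letter G) (x : NF) : NF :=
  match l with
  | Elt u g => match dec (projT1 x = u) with
               | left H => existT (nf G) (projT1 x) (act_elt (projT2 x) (castGv (eq_sym H) g))
               | right _ => x end
  | Arr e => act_arr e x
  end.

Definition LV (w : V G) (x : NF) := projT1 x = w /\ valid (projT2 x).

Lemma existT_castV w w' (H : w = w') r : existT (nf G) w' (castV H r) = existT (nf G) w r.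
Proof. destruct H. reflexivity. Qed.
Lemma castV_act_elt w w' (H : w = w') (r : nf G w) (g : GV G w) :
  castV H (act_elt r g) = act_elt (castV H r) (castGv H g).
Proof. destruct H. reflexivity. Qed.
Lemma castGv_sym (w w' : V G) (H : w = w') (g : GV G w') : castGv H (castGv (eq_sym H) g) = g.
Proof. destruct H. reflexivity. Qed.
Lemma head_tb_castV e w w' (H : w = w') (r : nf G w) : head_tb e (castV H r) <-> head_tb e r.
Proof. destruct H. tauto. Qed.
Lemma valid_castV w w' (H : w = w') (r : nf G w) : valid (castV H r) <-> valid r.
Proof. destruct H. tauto. Qed.
Lemma head_tb_bar e1 e2 w (r : nf G w) : bar e1 = bar e2 -> head_tb e1 r -> head_tb e2 r.
Proof. destruct r; simpl; auto. intros H [H1 H2]. rewrite <- H. auto. Qed.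

Lemma cancel_none e w (r : nf G w) : cancel_check e r = None <-> ~ head_tb e r.
Proof.
  destruct r as [v g|e2 t2 rest]; simpl. { split; auto. }
  destruct (dec (e2 = bar e /\ t2 = gone)); split; intros; try discriminate; tauto.
Qed.

Lemma act_Elt_loc u (r : nf G u) g :
  act (Elt u g) (existT (nf G) u r) = existT (nf G) u (act_elt r g).
Proof.
  simpl. destruct (dec (u = u)) as [H|n]; [|congruence]. rewrite castGv_refl. auto.
Qed.
Lemma act_Elt_other u g x : projT1 x <> u -> act (Elt u g) x = x.
Proof. intro n. simpl. destruct (dec (projT1 x = u)); tauto. Qed.

Lemma act_arr_none e (r : nf G (tgt e)) : ~ head_tb e r ->
  act (Arr e) (existT (nf G) (tgt e) r) = existT (nf G) (src e) (ncons e gone r).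
Proof.
  intro n. apply cancel_none in n. simpl. unfold act_arr. simpl. rewrite n.
  destruct (dec (tgt e = tgt e)) as [H|H]; [|congruence]. rewrite (UIP_refl _ _ H). auto.
Qed.

Lemma act_arr_tb e (rest : nf G (tgt (bar e))) :
  act (Arr e) (existT (nf G) (src (bar e)) (ncons (bar e) gone rest)) = existT (nf G) (tgt (bar e)) rest.
Proof.
  simpl. unfold act_arr. simpl. destruct (dec (bar e = bar e /\ gone = gone)) as [_|n]; auto.
  exfalso; auto.
Qed.

Lemma rep_gone e : rep e (gone : GV G (src e)) = gone.
Proof. apply rep_one_iff. exists gone. rewrite (hom_one (iota_hom G e)). auto. Qed.

Lemma valid_act l x : valid (projT2 x) -> valid (projT2 (act l x)).
Proof.
  destruct x as [w r]. destruct l as [e|u g]; simpl.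
  - unfold act_arr. simpl. destruct (cancel_check e r) eqn:Ec.
    + destruct r as [v g0|e2 t2 rest]; simpl in Ec; [discriminate|].
      destruct (dec (e2 = bar e /\ t2 = gone)); [|discriminate]. injection Ec; intros; subst.
      simpl in *. tauto.
    + destruct (dec (w = tgt e)) as [H|H]; simpl; auto. intro Hv. split; [apply rep_gone|].
      split. rewrite head_tb_castV. apply cancel_none; auto. apply valid_castV; auto.
  - destruct (dec (w = u)); simpl; auto. intro; apply valid_act_elt; auto.
Qed.

Lemma R_mul v (g h : GV G v) x : act (Elt v g) (act (Elt v h) x) = act (Elt v (gmul g h)) x.
Proof.
  destruct x as [w r]. destruct (classic (w = v)) as [H|H].
  - subst w. rewrite !act_Elt_loc, act_elt_mul. auto.
  - rewrite (act_Elt_other h (existT _ w r) H), (act_Elt_other g (existT _ w r) H), (act_Elt_other (gmul g h) (existT _ w r) H). auto.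
Qed.

Lemma R_one v x : LV v x -> act (Elt v gone) x = x.
Proof.
  destruct x as [w r]. intros [H Hv]. simpl in H, Hv. subst w. rewrite act_Elt_loc, act_elt_one; auto.
Qed.

Lemma existT_ncons_eq e' e (K : e' = e) (rest : nf G (tgt e')) (H : tgt e' = tgt e) :
  existT (nf G) (src e) (ncons e gone (castV H rest)) = existT (nf G) (src e') (ncons e' gone rest).
Proof. subst e'. rewrite (UIP_refl _ _ H). auto. Qed.

Lemma R_bar e x : LV (tgt (bar e)) x -> act (Arr e) (act (Arr (bar e)) x) = x.
Proof.
  destruct x as [w r]. intros [Hw Hv]. simpl in Hw, Hv.
  simpl. unfold act_arr at 2. simpl. destruct (cancel_check (bar e) r) eqn:Ec.
  - destruct r as [v g0|e2 t2 rest]; simpl in Ec; [discriminate|].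
    destruct (dec (e2 = bar (bar e) /\ t2 = gone)) as [[He Ht]|]; [|discriminate].
    injection Ec; intros; subst n. subst t2. subst e2. simpl in Hv. destruct Hv as [_ [Hn Hr]].
    unfold act_arr. simpl. 
    assert (Ec2 : cancel_check e rest = None).
    { apply cancel_none. intro Hh. apply Hn. eapply head_tb_bar; [|exact Hh].
      rewrite !bar_invol. auto. }
    rewrite Ec2. destruct (dec (tgt (bar (bar e)) = tgt e)) as [H|H].
    + apply existT_ncons_eq. apply bar_invol.
    + exfalso. apply H. rewrite bar_invol. auto.
  - destruct (dec (w = tgt (bar e))) as [H|H]; [|tauto]. simpl.
    unfold act_arr. simpl. destruct (dec (bar e = bar e /\ gone = gone)) as [_|n]; [|exfalso; auto].
    apply existT_castV.
Qed.

Lemma castGv_iota e' e (K : e' = e) (H : src e' = src e) x y :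
  castG (f_equal (@Ge G) K) x = y -> castGv (eq_sym H) (iota e y) = iota e' x.
Proof. subst e'. intro E. simpl in E. subst y. rewrite (UIP_refl _ _ H). auto. Qed.

Lemma R_edge e g x : LV (tgt e) x ->
  act (Elt (src e) (iota e g)) (act (Arr e) x) = act (Arr e) (act (Elt (tgt e) (iota_bar e g)) x).
Proof.
  destruct x as [w r]. intros [Hw Hv]. simpl in Hw, Hv.
  destruct (cancel_check e r) eqn:Ec.
  - destruct r as [v g0|e2 t2 rest]; simpl in Ec; [discriminate|].
    destruct (dec (e2 = bar e /\ t2 = gone)) as [[He Ht]|]; [|discriminate].
    injection Ec; intros; subst n. subst t2. subst e2.
    rewrite act_arr_tb.
    rewrite act_Elt_loc. simpl act_elt. rewrite gmulg1.
    change (iota_bar e g) with (iota (bar e) (castG (eq_sym (Ge_bar G e)) g)). rewrite rep_iota, hp_iota, act_arr_tb.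
    simpl. destruct (dec (tgt (bar e) = src e)) as [H|H].
    + simpl. f_equal. f_equal. unfold iota_bar.
      apply (castGv_iota (bar_invol G e)).
      rewrite !castG_trans. apply castG_refl.
    + exfalso. apply H. unfold tgt. rewrite bar_invol. auto.
  - subst w. assert (Hn : ~ head_tb e r) by (apply cancel_none; auto).
    rewrite act_arr_none; auto. rewrite !act_Elt_loc. simpl act_elt.
    rewrite gmulg1, rep_iota, hp_iota. rewrite act_arr_none; auto.
    intro Hh. apply Hn. eapply head_tb_act; eauto.
    exists eq_refl. eexists. reflexivity.
Qed.

End Act.


Section Words.
Variable G : RAGoG.
Implicit Types (a b c u v om : V G) (w z : list (letter G)) (x y : NF G).

Fixpoint fold (w : list (letter G)) (x : NF G) : NF G :=
  match w with [] => x | l :: w' => act l (fold w' x) end.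
Definition base (v : V G) : NF G := existT (nf G) v (nend v gone).
Definition F (v : V G) (w : list (letter G)) : NF G := fold w (base v).

Definition lstart (l : letter G) : V G := match l with Arr e => src e | Elt u _ => u end.
Definition lend (l : letter G) : V G := match l with Arr e => tgt e | Elt u _ => u end.

Lemma wpath_cons a l w b : wpath a (l :: w) b <-> a = lstart l /\ wpath (lend l) w b.
Proof.
  split.
  - intro H. inversion H; subst; simpl; auto.
  - intros [Ha Hw]. subst a. destruct l; simpl in *; constructor; auto.
Qed.
Lemma wpath_nil a b : wpath a [] b <-> a = b.
Proof. split. intro H; inversion H; auto. intro; subst; constructor. Qed.

Lemma wpath_app a w1 w2 c : wpath a (w1 ++ w2) c <-> exists b, wpath a w1 b /\ wpath b w2 c.
Proof.
  revert a. induction w1 as [|l w1 IH]; intro a; simpl.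
  - split. intro H; exists a; split; auto; constructor. intros [b [H1 H2]]. apply wpath_nil in H1. subst; auto.
  - rewrite wpath_cons. split.
    + intros [Ha H]. apply IH in H. destruct H as [b [H1 H2]]. exists b. split; auto. apply wpath_cons; auto.
    + intros [b [H1 H2]]. apply wpath_cons in H1. destruct H1 as [Ha H1]. split; auto. apply IH. eauto.
Qed.

Lemma wpath_det a w b b' : wpath a w b -> wpath a w b' -> b = b'.
Proof.
  intro H. revert b'. induction H; intros b' H'.
  - apply wpath_nil in H'. auto.
  - apply wpath_cons in H'. apply IHwpath. apply H'.
  - apply wpath_cons in H'. apply IHwpath. apply H'.
Qed.

Lemma fold_app w1 w2 x : fold (w1 ++ w2) x = fold w1 (fold w2 x).
Proof. induction w1; simpl; congruence. Qed.

Lemma act_LV l x : LV (lend l) x -> LV (lstart l) (act l x).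
Proof.
  intro H. split; [|apply valid_act; apply H].
  destruct x as [w r]. destruct H as [Hw Hv]. simpl in Hw, Hv. destruct l as [e|u g]; simpl in *.
  - unfold act_arr. simpl. destruct (cancel_check e r) eqn:Ec.
    + destruct r as [v g0|e2 t2 rest]; simpl in Ec; [discriminate|].
      destruct (dec (e2 = bar e /\ t2 = gone)) as [[He _]|]; [|discriminate].
      injection Ec; intros; subst. simpl. unfold tgt. rewrite bar_invol. auto.
    + destruct (dec (w = tgt e)); simpl; tauto.
  - subst w. destruct (dec (u = u)); simpl; tauto.
Qed.

Lemma fold_LV a w b x : wpath a w b -> LV b x -> LV a (fold w x).
Proof.
  intro H. induction H; simpl; intro Hx; auto.
  - apply (act_LV (Arr e)). simpl. auto.
  - apply (act_LV (Elt u g)). simpl. auto.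
Qed.

Lemma base_LV v : LV v (base v).
Proof. split; simpl; auto. Qed.

Lemma F_LV a w b : wpath a w b -> LV a (F b w).
Proof. intro H. apply (fold_LV H). apply base_LV. Qed.

Lemma rel_ends l r a b : rel_pair l r -> wpath a l b -> wpath a r b.
Proof.
  intro Hr. destruct Hr; rewrite ?wpath_cons, ?wpath_nil; simpl; rewrite ?wpath_cons, ?wpath_nil; simpl.
  - intuition (subst; auto).
  - intuition (subst; auto).
  - rewrite ?wpath_cons, ?wpath_nil. unfold tgt. rewrite bar_invol. intuition (subst; auto).
  - rewrite ?wpath_cons, ?wpath_nil. simpl. intuition (subst; auto).
Qed.

Lemma rel_fold l r a b x : rel_pair l r -> wpath a l b -> LV b x -> fold l x = fold r x.
Proof.
  intros Hr Hp Hx. destruct Hr; cbn [fold].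
  - apply R_mul.
  - apply wpath_cons in Hp. destruct Hp as [_ Hp]. apply wpath_nil in Hp. subst. apply R_one. auto.
  - apply wpath_cons in Hp. destruct Hp as [_ Hp]. apply wpath_cons in Hp. destruct Hp as [_ Hp].
    apply wpath_nil in Hp. simpl in Hp. subst. apply R_bar. auto.
  - apply wpath_cons in Hp. destruct Hp as [_ Hp]. apply wpath_cons in Hp. destruct Hp as [_ Hp].
    apply wpath_nil in Hp. simpl in Hp. subst. apply R_edge. auto.
Qed.

Lemma step_inv om w w' v : step om w w' -> wpath om w v -> F v w = F v w' /\ wpath om w' v.
Proof.
  intros [_ [Hv' [w1 [w2 [l [r [Hr Hc]]]]]]] Hp.
  destruct Hc as [[E1 E2]|[E1 E2]]; subst w w'.
  - apply wpath_app in Hp. destruct Hp as [b1 [P1 P2]]. apply wpath_app in P2. destruct P2 as [b2 [P2 P3]].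
    unfold F. rewrite !fold_app. split.
    + f_equal. eapply rel_fold; eauto. apply F_LV; auto.
    + apply wpath_app. exists b1. split; auto. apply wpath_app. exists b2. split; auto.
      apply (rel_ends Hr); auto.
  - apply wpath_app in Hp. destruct Hp as [b1 [P1 P2]]. apply wpath_app in P2. destruct P2 as [b2 [P2 P3]].
    destruct Hv' as [v' Q]. apply wpath_app in Q. destruct Q as [b1' [Q1 Q2]]. apply wpath_app in Q2.
    destruct Q2 as [b2' [Q2 Q3]]. rewrite (wpath_det Q1 P1) in Q2.
    assert (E2 := wpath_det (rel_ends Hr Q2) P2). subst b2'.
    unfold F. rewrite !fold_app. split.
    + f_equal. symmetry. eapply rel_fold; eauto. apply F_LV; auto.
    + apply wpath_app. exists b1. split; auto. apply wpath_app. exists b2. split; auto.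
Qed.

Lemma geq_inv om w w' v : geq om w w' -> wpath om w v -> F v w = F v w' /\ wpath om w' v.
Proof.
  intro H. revert v. induction H; intros v Hp.
  - eapply step_inv; eauto.
  - auto.
  - destruct (IHclos_refl_trans1 v Hp) as [E1 P1]. destruct (IHclos_refl_trans2 v P1) as [E2 P2].
    split; congruence.
Qed.

Lemma geq_end om w w' v : geq om w w' -> wpath om w v -> wpath om w' v.
Proof. intros H P. apply (geq_inv H P). Qed.

Lemma geq_sym om w w' : geq om w w' -> geq om w' w.
Proof.
  intro H. induction H.
  - apply rt_step. destruct H as [H1 [H2 [w1 [w2 [l [r [Hr Hc]]]]]]]. split; auto. split; auto.
    exists w1, w2, l, r. split; auto. tauto.
  - apply rt_refl.
  - eapply rt_trans; eauto.
Qed.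

Lemma act_inj l x y : LV (lend l) x -> LV (lend l) y -> act l x = act l y -> x = y.
Proof.
  intros Hx Hy E. destruct l as [e|u g]; cbn [lend] in Hx, Hy.
  - pose proof (R_bar (bar e)) as RB. rewrite (bar_invol G e) in RB.
    rewrite <- (RB x Hx), <- (RB y Hy). rewrite E. auto.
  - rewrite <- (R_one Hx), <- (R_one Hy), <- (gmulVg g), <- !R_mul. rewrite E. auto.
Qed.

Lemma fold_inj a w b x y : wpath a w b -> LV b x -> LV b y -> fold w x = fold w y -> x = y.
Proof.
  intro H. induction H; simpl; intros Hx Hy E; auto.
  - apply IHwpath; auto. apply (act_inj (Arr e)); simpl; auto; apply (fold_LV H); auto.
  - apply IHwpath; auto. apply (act_inj (Elt u g)); simpl; auto; apply (fold_LV H); auto.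
Qed.

Lemma cancel om xs u w1 w2 v : geq om (xs ++ w1) (xs ++ w2) -> wpath om xs u -> wpath u w1 v ->
  wpath u w2 v -> F v w1 = F v w2.
Proof.
  intros H P P1 P2. assert (Q : wpath om (xs ++ w1) v) by (apply wpath_app; eauto).
  destruct (geq_inv H Q) as [E _]. unfold F in E. rewrite !fold_app in E.
  apply (fold_inj P); auto; apply F_LV; auto.
Qed.

Lemma geq_app_r om w w' v z c : geq om w w' -> wpath om w v -> wpath v z c -> geq om (w ++ z) (w' ++ z).
Proof.
  intro H. revert v. induction H; intros v P Pz.
  - apply rt_step. destruct (step_inv H P) as [_ P'].
    destruct H as [_ [_ [w1 [w2 [l [r [Hr Hc]]]]]]]. split; [exists c; apply wpath_app; eauto|].
    split; [exists c; apply wpath_app; eauto|].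
    exists w1, (w2 ++ z), l, r. split; auto.
    destruct Hc as [[E1 E2]|[E1 E2]]; subst; [left|right]; rewrite <- !app_assoc; auto.
  - apply rt_refl.
  - eapply rt_trans. eapply IHclos_refl_trans1; eauto. eapply IHclos_refl_trans2; eauto.
    eapply geq_end; eauto.
Qed.

Lemma geq_rel om xs l r z c : rel_pair l r -> wpath om (xs ++ l ++ z) c -> geq om (xs ++ l ++ z) (xs ++ r ++ z).
Proof.
  intros Hr P. apply rt_step. split; [exists c; auto|]. split.
  - exists c. apply wpath_app in P. destruct P as [b1 [P1 P2]]. apply wpath_app in P2.
    destruct P2 as [b2 [P2 P3]]. apply wpath_app. exists b1. split; auto. apply wpath_app. exists b2.
    split; auto. apply (rel_ends Hr); auto.
  - exists xs, z, l, r. split; auto.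
Qed.

End Words.
Arguments base {G}.


Section Obs.
Variable G : RAGoG.
Implicit Types (a b c u v om : V G) (w z : list (letter G)) (x y : NF G).

Fixpoint nedges {wv} (r : nf G wv) : list (E G) :=
  match r with nend _ _ => [] | ncons e _ rest => e :: nedges rest end.
Definition edgesN x := nedges (projT2 x).

Lemma nedges_act_elt wv (r : nf G wv) g : nedges (act_elt r g) = nedges r.
Proof. revert g. induction r; intro; simpl; f_equal; auto. Qed.

Lemma edgesN_Elt u g x : edgesN (act (Elt u g) x) = edgesN x.
Proof.
  destruct x as [wv r]. unfold edgesN. simpl. destruct (dec (wv = u)); simpl; auto. apply nedges_act_elt.
Qed.

Lemma arr_edges e x : LV (tgt e) x ->
  (~ head_tb e (projT2 x) /\ edgesN (act (Arr e) x) = e :: edgesN x) \/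
  (head_tb e (projT2 x) /\ edgesN x = bar e :: edgesN (act (Arr e) x)).
Proof.
  destruct x as [wv r]. intros [Hw Hv]. simpl in Hw, Hv. simpl projT2.
  destruct (cancel_check e r) eqn:Ec.
  - right. destruct r as [v g0|e2 t2 rest]; simpl in Ec; [discriminate|].
    destruct (dec (e2 = bar e /\ t2 = gone)) as [[He Ht]|]; [|discriminate].
    injection Ec; intros; subst. simpl. split; auto. unfold edgesN. simpl. unfold act_arr. simpl.
    destruct (dec (bar e = bar e /\ gone = gone)) as [_|n]; [auto|exfalso; auto].
  - left. subst wv. assert (Hn : ~ head_tb e r) by (apply cancel_none; auto).
    split; auto. unfold edgesN. rewrite act_arr_none; auto.
Qed.

Lemma head_tb_edges e wv (r : nf G wv) : head_tb e r -> exists es, nedges r = bar e :: es.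
Proof. destruct r; simpl; [tauto|]. intros [H _]. subst. eauto. Qed.

Definition endv {wv} (r : nf G wv) : {v : V G & GV G v} :=
  (fix f {wv1} (r : nf G wv1) := match r with nend v g => existT _ v g | ncons _ _ rest => f rest end) wv r.

Lemma nend_inj u g g' : existT (nf G) u (nend u g) = existT (nf G) u (nend u g') -> g = g'.
Proof.
  intro H. apply (f_equal (fun x => endv (projT2 x))) in H. simpl in H.
  apply inj_pairT2 in H. auto.
Qed.

Lemma base_edges v : edgesN (base v) = [].
Proof. reflexivity. Qed.

Lemma F_cons l w v : F v (l :: w) = act l (F v w).
Proof. reflexivity. Qed.

Lemma act_Elt_nend u (a g : GV G u) : act (Elt u a) (existT (nf G) u (nend u g)) = existT (nf G) u (nend u (gmul a g)).
Proof. rewrite act_Elt_loc. reflexivity. Qed.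

Lemma geq_trans om w w' w'' : geq om w w' -> geq om w' w'' -> geq om w w''.
Proof. intros; eapply rt_trans; eauto. Qed.
Lemma geq_refl om w : geq om w w.
Proof. apply rt_refl. Qed.

Lemma geq_rel1 om xs l r c : rel_pair l r -> wpath om (xs ++ l) c -> geq om (xs ++ l) (xs ++ r).
Proof.
  intros Hr P. pose proof (@geq_rel G om xs l r [] c Hr) as H. rewrite !app_nil_r in H. apply H. auto.
Qed.

End Obs.


Section Lab.
Variable G : RAGoG.
Variable om : V G.
Implicit Types (a b c u v : V G) (w z : list (letter G)) (x y : NF G).

Definition linv (l : letter G) : letter G :=
  match l with Arr e => Arr (bar e) | Elt u g => Elt u (ginv g) end.

Lemma geq_cancel_inv xs v l : wpath om xs v -> lstart l = v ->
  geq om (xs ++ [l; linv l]) xs.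
Proof.
  intros P Hl. destruct l as [e|u g]; simpl in Hl; subst v.
  - pose proof (@geq_rel1 G om xs [Arr e; Arr (bar e)] [] (tgt (bar e))).
    rewrite app_nil_r in H. apply H. constructor. apply wpath_app. exists (src e). split; auto.
    apply wpath_cons. split; auto. apply wpath_cons. split; auto. apply wpath_nil. simpl. unfold tgt. rewrite bar_invol. auto.
  - eapply geq_trans.
    + apply (@geq_rel1 G om xs [Elt u g; Elt u (ginv g)] [Elt u (gmul g (ginv g))] u). constructor.
      apply wpath_app. exists u. split; auto. repeat (apply wpath_cons; split; auto). apply wpath_nil; auto.
    + rewrite gmulgV. pose proof (@geq_rel1 G om xs [Elt u gone] [] u) as H. rewrite app_nil_r in H.
      apply H. constructor. apply wpath_app. exists u. split; auto. apply wpath_cons. split; auto. apply wpath_nil; auto.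
Qed.

Lemma linv_end l : lstart (linv l) = lend l.
Proof. destruct l; reflexivity. Qed.
Lemma linv_end2 l : lend (linv l) = lstart l.
Proof. destruct l; simpl; auto. unfold tgt. rewrite bar_invol. auto. Qed.

Lemma geq_flip xs ys v l : wpath om xs v -> lstart l = v -> geq om ys (xs ++ [l]) ->
  geq om xs (ys ++ [linv l]).
Proof.
  intros P Hl E. apply geq_sym. eapply geq_trans.
  - apply (geq_app_r (v := lend l) (z := [linv l]) (c := lend (linv l)) E).
    + apply (geq_end (geq_sym E)). apply wpath_app. exists v. split; auto. apply wpath_cons. split; auto. apply wpath_nil. auto.
    + apply wpath_cons. split; [symmetry; apply linv_end|]. apply wpath_nil. auto.
  - rewrite <- app_assoc. simpl. eapply geq_cancel_inv; eauto.
Qed.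

Lemma gen_start v l : gen v l -> lstart l = v.
Proof. intros [[e [H1 H2]]|[i [g [H1 _]]]]; subst; auto. Qed.

Lemma gen_linv v l : gen v l -> gen (lend l) (linv l).
Proof.
  intros [[e [H1 H2]]|[i [g [H1 [H2 H3]]]]]; subst; simpl.
  - left. exists (bar e). auto.
  - right. exists i, (ginv g). split; auto. split. apply fac_inv; auto.
    intro H. apply H3. rewrite <- (inv_inv g), H. apply inv_one.
Qed.

Lemma adj_sym xs ys : adjX om xs ys -> adjX om ys xs.
Proof.
  intros [Vy [v [P [l [Hg E]]]]]. split; [exists v; auto|].
  exists (lend l). split.
  - apply (geq_end (geq_sym E)). apply wpath_app. exists v. split; auto. apply wpath_cons.
    split; [symmetry; apply gen_start; auto|]. apply wpath_nil; auto.
  - exists (linv l). split; [apply (gen_linv Hg)|]. apply (geq_flip l P); auto. apply gen_start; auto.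
Qed.

Definition Lab xs ys u (A : vI (Gv u)) : Prop :=
  wpath om xs u /\ valid_from om ys /\
  exists a : GV G u, fac (Gv u) A a /\ a <> gone /\ geq om ys (xs ++ [Elt u a]).

Lemma lab_iff p u A : labelled_factor om p u A <-> Lab (fst p) (snd p) u A \/ Lab (snd p) (fst p) u A.
Proof. reflexivity. Qed.

Lemma Lab_flip xs ys u A : Lab xs ys u A -> Lab ys xs u A.
Proof.
  intros [P [Vy [a [Ha [na E]]]]]. split; [|split].
  - apply (geq_end (geq_sym E)). apply wpath_app. exists u. split; auto. apply wpath_cons. split; auto. apply wpath_nil; auto.
  - exists u; auto.
  - exists (ginv a). split; [apply fac_inv; auto|]. split.
    + intro H. apply na. rewrite <- (inv_inv a), H. apply inv_one.
    + change (Elt u (ginv a)) with (linv (Elt u a)). apply (geq_flip (Elt u a) P); auto.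
Qed.

Lemma Lab_geq xs ys xs' ys' u A : Lab xs ys u A -> geq om xs xs' -> geq om ys ys' -> Lab xs' ys' u A.
Proof.
  intros [P [[vy Vy] [a [Ha [na E]]]]] E1 E2. split; [|split].
  - apply (geq_end E1 P).
  - exists vy. apply (geq_end E2 Vy).
  - exists a. split; auto. split; auto. eapply geq_trans; [apply (geq_sym E2)|]. eapply geq_trans; [apply E|].
    apply (geq_app_r (c := u) E1 P). apply wpath_cons. split; auto. apply wpath_nil; auto.
Qed.

Definition RR u (A : vI (Gv u)) v (B : vI (Gv v)) : Prop :=
  exists gam : gpath u v, forall b : Gv v, phi_path gam (fac (Gv u) A) b <-> fac (Gv v) B b.

Lemma RR_refl u A : RR u A u A.
Proof. exists (gnil u). simpl. tauto. Qed.

Fixpoint gapp {u v k : V G} (p : gpath u v) : gpath v k -> gpath u k :=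
  match p in gpath u0 v0 return gpath v0 k -> gpath u0 k with
  | gnil _ => fun q => q
  | gcons e p' => fun q => gcons e (gapp p' q)
  end.

Lemma phi_path_app u v k (p : gpath u v) (q : gpath v k) P :
  phi_path (gapp p q) P = phi_path q (phi_path p P).
Proof. revert P. induction p; intro P; simpl; auto. Qed.

Lemma RR_trans u A v B k C : RR u A v B -> RR v B k C -> RR u A k C.
Proof.
  intros [g1 H1] [g2 H2]. exists (gapp g1 g2). intro b. rewrite phi_path_app.
  assert (E : phi_path g1 (fac (Gv u) A) = fac (Gv v) B).
  { apply functional_extensionality. intro y. apply propositional_extensionality. apply H1. }
  rewrite E. apply H2.
Qed.

Lemma F_elt1 u (a : GV G u) : F u [Elt u a] = existT (nf G) u (nend u (gmul a gone)).
Proof. unfold F. simpl fold. unfold base. apply act_Elt_nend. Qed.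

Lemma Lab_uniq xs ys u A v B : Lab xs ys u A -> Lab xs ys v B -> RR u A v B.
Proof.
  intros [P [Vy [a [Ha [na E]]]]] [P' [_ [b [Hb [nb E']]]]].
  assert (uv := wpath_det P P'). subst v.
  assert (Ec : F u [Elt u a] = F u [Elt u b]).
  { apply (cancel (om := om) (xs := xs) (u := u)); auto.
    - eapply geq_trans; [apply geq_sym; eauto|]; auto.
    - apply wpath_cons. split; auto. apply wpath_nil; auto.
    - apply wpath_cons. split; auto. apply wpath_nil; auto. }
  rewrite !F_elt1 in Ec. apply nend_inj in Ec. rewrite !gmulg1 in Ec. subst b.
  assert (AB : A = B) by (eapply fac_uniq; eauto). subst B. apply RR_refl.
Qed.

End Lab.
Arguments RR {G}. Arguments RR_refl {G}.


Section Local.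
Variable G : RAGoG.
Variable om : V G.

Fixpoint narr (w : list (letter G)) : nat :=
  match w with [] => 0 | Arr _ :: w' => S (narr w') | Elt _ _ :: w' => narr w' end.

Lemma even_S n : Nat.even (S n) = negb (Nat.even n).
Proof. rewrite Nat.even_succ, <- Nat.negb_even. auto. Qed.

Lemma parity (a b : V G) w : wpath a w b -> Nat.even (length (edgesN (F b w))) = Nat.even (narr w).
Proof.
  intro P. induction P as [v|e w v P IH|u g w v P IH].
  - reflexivity.
  - rewrite F_cons. simpl narr. destruct (arr_edges e (F_LV P)) as [[_ E]|[_ E]].
    + rewrite E. simpl length. rewrite !even_S, IH. auto.
    + rewrite E in IH. simpl length in IH. rewrite !even_S in IH.
      rewrite even_S, <- IH, Bool.negb_involutive. auto.
  - rewrite F_cons, edgesN_Elt. auto.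
Qed.

Lemma F_eq_parity (b u : V G) w1 w2 : wpath u w1 b -> wpath u w2 b -> F b w1 = F b w2 ->
  Nat.even (narr w1) = Nat.even (narr w2).
Proof. intros P1 P2 E. rewrite <- (parity P1), <- (parity P2), E. auto. Qed.

Lemma edges_arr_empty e (x : NF G) : LV (tgt e) x -> edgesN x = [] -> edgesN (act (Arr e) x) = [e].
Proof.
  intros H E. destruct (arr_edges e H) as [[_ E2]|[_ E2]]; rewrite E in *; [auto|discriminate].
Qed.

Lemma edges_arr_two e f (x : NF G) : LV (tgt e) x -> edgesN x = [f] -> f <> bar e -> edgesN (act (Arr e) x) = [e; f].
Proof.
  intros H E n. destruct (arr_edges e H) as [[_ E2]|[_ E2]]; rewrite E in *; [auto|].
  injection E2; intros; subst; tauto.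
Qed.

Lemma geq_ext xs ys l zs c : geq om ys (xs ++ [l]) -> wpath om ys (lend l) -> wpath (lend l) zs c ->
  geq om (ys ++ zs) (xs ++ l :: zs).
Proof.
  intros E P Pz. pose proof (geq_app_r E P Pz) as H. rewrite <- app_assoc in H. apply H.
Qed.

Lemma rcancel xs ys l : geq om (xs ++ [l]) (ys ++ [l]) -> wpath om xs (lstart l) -> geq om xs ys.
Proof.
  intros E P.
  assert (Px : wpath om (xs ++ [l]) (lend l)).
  { apply wpath_app. exists (lstart l). split; auto. apply wpath_cons. split; auto. apply wpath_nil; auto. }
  assert (Py := geq_end E Px). apply wpath_app in Py. destruct Py as [m [Py Pl]].
  apply wpath_cons in Pl. destruct Pl as [Hm _]. subst m.
  assert (C1 : geq om (xs ++ [l; linv l]) xs) by (eapply geq_cancel_inv; eauto).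
  assert (C2 : geq om (ys ++ [l; linv l]) ys) by (eapply geq_cancel_inv; eauto).
  assert (Pi : wpath (lend l) [linv l] (lend (linv l))).
  { apply wpath_cons. split; [symmetry; apply linv_end|]. apply wpath_nil; auto. }
  pose proof (geq_app_r E Px Pi) as C3. rewrite <- !app_assoc in C3. simpl in C3.
  eapply geq_trans; [apply geq_sym; apply C1|]. eapply geq_trans; [apply C3|]. auto.
Qed.


Lemma edges_Elt_cons (vc u : V G) (a : GV G u) w : edgesN (F vc (Elt u a :: w)) = edgesN (F vc w).
Proof. rewrite F_cons. apply edgesN_Elt. Qed.

Lemma edges_Arr_cons (vc : V G) e w : wpath (tgt e) w vc ->
  (edgesN (F vc w) = [] -> edgesN (F vc (Arr e :: w)) = [e]) /\
  (forall f, edgesN (F vc w) = [f] -> f <> bar e -> edgesN (F vc (Arr e :: w)) = [e; f]).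
Proof.
  intro P. rewrite F_cons. split.
  - apply edges_arr_empty. apply (F_LV P).
  - intros f. apply edges_arr_two. apply (F_LV P).
Qed.

Lemma edges_nil (vc : V G) : edgesN (F vc []) = [].
Proof. reflexivity. Qed.

Lemma gen_cases (v : V G) l : gen v l ->
  (exists e, l = Arr e /\ src e = v) \/
  (exists i (a : GV G v), l = Elt v a /\ fac (Gv v) i a /\ a <> gone).
Proof. auto. Qed.

Lemma path1 (u : V G) l vc : wpath u [l] vc -> u = lstart l /\ vc = lend l.
Proof. intro P. apply wpath_cons in P. destruct P as [H P]. apply wpath_nil in P. auto. Qed.

Lemma path_single (u : V G) l : u = lstart l -> wpath u [l] (lend l).
Proof. intro H. apply wpath_cons. split; auto. apply wpath_nil; auto. Qed.


Lemma edges_A1 (u vc : V G) e : wpath u [Arr e] vc -> edgesN (F vc [Arr e]) = [e].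
Proof.
  intro P. apply path1 in P. destruct P as [_ P]. simpl in P. subst vc.
  rewrite F_cons. apply edges_arr_empty; [apply base_LV|reflexivity].
Qed.

Lemma edges_AA (u vc : V G) e f : wpath u [Arr e; Arr f] vc -> f <> bar e -> edgesN (F vc [Arr e; Arr f]) = [e; f].
Proof.
  intros P n. apply wpath_cons in P. destruct P as [_ P]. simpl in P.
  rewrite F_cons. apply edges_arr_two; auto. apply (F_LV P). apply (edges_A1 P).
Qed.

Lemma edges_AE (u vc : V G) e v (a : GV G v) : wpath u [Arr e; Elt v a] vc -> edgesN (F vc [Arr e; Elt v a]) = [e].
Proof.
  intros P. apply wpath_cons in P. destruct P as [_ P]. simpl in P.
  rewrite F_cons. apply edges_arr_empty; auto. apply (F_LV P). rewrite edges_Elt_cons. reflexivity.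
Qed.

Lemma edges_E1 (vc v : V G) (a : GV G v) : edgesN (F vc [Elt v a]) = [].
Proof. rewrite edges_Elt_cons. reflexivity. Qed.

Lemma F_EE (u : V G) (a1 a2 : GV G u) : F u [Elt u a1; Elt u a2] = existT (nf G) u (nend u (gmul a1 (gmul a2 gone))).
Proof. rewrite F_cons, F_elt1, act_Elt_nend. auto. Qed.

Lemma tri (xa xb xc : list (letter G)) :
  adjX om xa xb -> adjX om xb xc -> adjX om xa xc -> ~ geq om xa xb -> ~ geq om xb xc -> ~ geq om xa xc ->
  exists v (C : vI (Gv v)), Lab om xa xb v C /\ Lab om xb xc v C /\ Lab om xa xc v C.
Proof.
  intros [Vb [v1 [Pa [s1 [g1 E1]]]]] [Vc [v2 [Pb [s2 [g2 E2]]]]] [_ [v1' [Pa' [s3 [g3 E3]]]]] n1 n2 n3.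
  assert (v1' = v1) by (eapply wpath_det; eauto). subst v1'. clear Pa'.
  assert (h1 := gen_start g1). assert (h3 := gen_start g3).
  assert (Pb' : wpath om xb (lend s1)).
  { apply (geq_end (geq_sym E1)). apply wpath_app. exists v1. split; auto. apply path_single; auto. }
  assert (v2 = lend s1) by (eapply wpath_det; eauto). subst v2. clear Pb'. assert (h2 := gen_start g2).
  assert (Pc : wpath om xc (lend s2)).
  { apply (geq_end (geq_sym E2)). apply wpath_app. exists (lend s1). split; auto. apply path_single; auto. }
  assert (Pc' : wpath om xc (lend s3)).
  { apply (geq_end (geq_sym E3)). apply wpath_app. exists v1. split; auto. apply path_single; auto. }
  assert (H23 : lend s3 = lend s2) by (eapply wpath_det; eauto).
  assert (E12 : geq om xc (xa ++ [s1; s2])).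
  { eapply geq_trans; [apply E2|]. eapply geq_ext; [exact E1|exact Pb|apply path_single; auto]. }
  assert (P12 : wpath v1 [s1; s2] (lend s2)).
  { apply wpath_cons. split; auto. apply path_single; auto. }
  assert (P3 : wpath v1 [s3] (lend s2)) by (rewrite <- H23; apply path_single; auto).
  assert (Eq : F (lend s2) [s3] = F (lend s2) [s1; s2]).
  { apply (cancel (om := om) (xs := xa) (u := v1)); auto. eapply geq_trans; [apply geq_sym; apply E3|]. auto. }
  assert (Par := F_eq_parity P3 P12 Eq).
  assert (Ed := f_equal (@edgesN G) Eq).
  destruct (gen_cases g1) as [[e [-> He]]|[i1 [a1 [-> [Ha1 na1]]]]].
  -
    destruct (gen_cases g2) as [[f [-> Hf]]|[i2 [a2 [-> [Ha2 na2]]]]].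
    + destruct (classic (f = bar e)) as [->|nf].
      * exfalso. apply n3. apply geq_sym. eapply geq_trans; [apply E12|]. eapply geq_cancel_inv; eauto.
      * exfalso. destruct (gen_cases g3) as [[f' [-> _]]|[i3 [a3 [-> _]]]].
        -- simpl in Par. discriminate.
        -- rewrite edges_E1, (edges_AA P12 nf) in Ed. discriminate.
    + exfalso. destruct (gen_cases g3) as [[f' [-> _]]|[i3 [a3 [-> _]]]]; [|simpl in Par; discriminate].
      rewrite (edges_A1 P3), (edges_AE P12) in Ed. injection Ed; intros; subst f'.
      apply n2. eapply geq_trans; [apply E1|]. apply geq_sym. auto.
  -
    destruct (gen_cases g2) as [[f [-> Hf]]|[i2 [a2 [-> [Ha2 na2]]]]].
    + exfalso. destruct (gen_cases g3) as [[f' [-> _]]|[i3 [a3 [-> _]]]]; [|simpl in Par; discriminate].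
      rewrite (edges_A1 P3), edges_Elt_cons, (edges_A1 (proj2 (proj1 (wpath_cons _ _ _ _) P12))) in Ed.
      injection Ed; intros; subst f'.
      apply n1. apply geq_sym. eapply rcancel.
      * eapply geq_trans; [apply geq_sym; apply E2|]. exact E3.
      * simpl. simpl in Hf. rewrite Hf. auto.
    + destruct (gen_cases g3) as [[f' [-> _]]|[i3 [a3 [-> [Ha3 na3]]]]]; [exfalso; simpl in Par; discriminate|].
      simpl in Eq. rewrite F_EE, F_elt1 in Eq. apply nend_inj in Eq. rewrite !gmulg1 in Eq.
      cbn [lend] in *. assert (HH : i2 = i1 /\ i3 = i1) by (eapply fac_tri; [exact Ha1|exact Ha2|exact Ha3|auto|auto|auto|exact Eq]). destruct HH as [-> ->].
      exists v1, i1. split; [|split].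
      * split; auto. split; auto. exists a1. auto.
      * split; auto. split; auto. exists a2. auto.
      * split; auto. split; auto. exists a3. auto.
Qed.


Lemma Lab_gen2 xs ys u (A : vI (Gv u)) l : Lab om xs ys u A -> gen u l -> geq om ys (xs ++ [l]) ->
  exists a, l = Elt u a /\ fac (Gv u) A a /\ a <> gone.
Proof.
  intros [P [Vy [b [Hb [nb E]]]]] g E'.
  assert (E2 : geq om (xs ++ [l]) (xs ++ [Elt u b])) by (eapply geq_trans; [apply geq_sym; apply E'|]; auto).
  assert (Pl : wpath om (xs ++ [l]) (lend l)).
  { apply wpath_app. exists u. split; auto. apply path_single. symmetry; apply (gen_start g). }
  assert (Pb : wpath om (xs ++ [Elt u b]) u).
  { apply wpath_app. exists u. split; auto. apply path_single. auto. }
  assert (He : lend l = u) by (eapply wpath_det; [apply (geq_end E2 Pl)|]; auto).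
  assert (Pl1 : wpath u [l] u) by (rewrite <- He at 2; apply path_single; symmetry; apply (gen_start g)).
  assert (Ec : F u [l] = F u [Elt u b]).
  { apply (cancel (om := om) (xs := xs) (u := u)); auto. apply path_single; auto. }
  destruct (gen_cases g) as [[e [-> _]]|[i [a [-> [Ha na]]]]].
  - exfalso. assert (Par := F_eq_parity Pl1 (path_single (u := u) (Elt u b) eq_refl) Ec). simpl in Par. discriminate.
  - rewrite !F_elt1 in Ec. apply nend_inj in Ec. rewrite !gmulg1 in Ec. subst a. exists b. auto.
Qed.

Lemma edges_AAE (u vc : V G) e f v (g : GV G v) : wpath u [Arr e; Arr f; Elt v g] vc -> f <> bar e ->
  edgesN (F vc [Arr e; Arr f; Elt v g]) = [e; f].
Proof.
  intros P n. apply wpath_cons in P. destruct P as [_ P]. simpl in P.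
  rewrite F_cons. apply edges_arr_two; auto. apply (F_LV P). apply (edges_AE P).
Qed.

Lemma comb ys zs u (p q : GV G u) i : geq om zs (ys ++ [Elt u p; Elt u q]) -> wpath om ys u ->
  valid_from om zs -> fac (Gv u) i p -> fac (Gv u) i q -> ~ geq om ys zs -> ~ adjX om ys zs -> False.
Proof.
  intros E P Vz Hp Hq n1 n2.
  assert (E' : geq om zs (ys ++ [Elt u (gmul p q)])).
  { eapply geq_trans; [apply E|]. apply (@geq_rel1 G om ys [Elt u p; Elt u q] [Elt u (gmul p q)] u).
    constructor. apply wpath_app. exists u. split; auto. apply wpath_cons. split; auto. apply path_single; auto. }
  destruct (classic (gmul p q = gone)) as [H1|H1].
  - apply n1. apply geq_sym. eapply geq_trans; [apply E'|]. rewrite H1.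
    pose proof (@geq_rel1 G om ys [Elt u gone] [] u) as H. rewrite app_nil_r in H. apply H. constructor.
    apply wpath_app. exists u. split; auto. apply path_single; auto.
  - apply n2. split; auto. exists u. split; auto. exists (Elt u (gmul p q)). split; auto.
    right. exists i, (gmul p q). split; auto. split; auto. apply fac_mul; auto.
Qed.

End Local.


Lemma graphical_cast (H H' K : gpgroup) (Eq : H' = H) (i : H -> K) :
  graphical i -> graphical (fun x : H' => i (castG Eq x)).
Proof. destruct Eq. simpl. auto. Qed.

Section Opp.
Variable G : RAGoG.
Variable om : V G.

Lemma iota_bar_graphical (e : E G) : graphical (iota_bar e).
Proof. unfold iota_bar. apply graphical_cast. apply iota_graphical. Qed.

Lemma act_Arr_nend e v (g : GV G v) : v = tgt e ->
  exists r, act (Arr e) (existT (nf G) v (nend v g)) = existT (nf G) (src e) (ncons e gone r).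
Proof.
  intro H. simpl. unfold act_arr. simpl. destruct (dec (v = tgt e)) as [H'|n]; [|tauto].
  eexists. reflexivity.
Qed.

Lemma opp (xa xb xc xd : list (letter G)) u (A : vI (Gv u)) :
  adjX om xa xb -> adjX om xb xc -> adjX om xc xd -> adjX om xd xa ->
  ~ adjX om xa xc -> ~ adjX om xb xd ->
  ~ geq om xa xb -> ~ geq om xb xc -> ~ geq om xc xd -> ~ geq om xd xa -> ~ geq om xa xc -> ~ geq om xb xd ->
  Lab om xa xb u A -> exists w (C : vI (Gv w)), Lab om xc xd w C /\ RR u A w C.
Proof.
  intros [Vb [v1 [Pa [s1 [g1 E1]]]]] [Vc [v2 [Pb [s2 [g2 E2]]]]] [Vd [v3 [Pc [s3 [g3 E3]]]]]
    [Va [v4 [Pd [s4 [g4 E4]]]]] na nb n1 n2 n3 n4 n5 n6 HL.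
  assert (Pa' := proj1 HL). assert (v1 = u) by (eapply wpath_det; eauto). subst v1. clear Pa'.
  destruct (Lab_gen2 HL g1 E1) as [a1 [-> [Ha1 na1]]].
  assert (Pb' : wpath om xb u).
  { apply (geq_end (geq_sym E1)). apply wpath_app. exists u. split; auto. apply path_single; auto. }
  assert (v2 = u) by (eapply wpath_det; eauto). subst v2. clear Pb'.
  assert (h2 := gen_start g2).
  assert (Pc' : wpath om xc (lend s2)).
  { apply (geq_end (geq_sym E2)). apply wpath_app. exists u. split; auto. apply path_single; auto. }
  assert (v3 = lend s2) by (eapply wpath_det; eauto). subst v3. clear Pc'.
  assert (h3 := gen_start g3).
  assert (Pd' : wpath om xd (lend s3)).
  { apply (geq_end (geq_sym E3)). apply wpath_app. exists (lend s2). split; auto. apply path_single; auto. }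
  assert (v4 = lend s3) by (eapply wpath_det; eauto). subst v4. clear Pd'.
  assert (h4 := gen_start g4).
  assert (Pa2 : wpath om xa (lend s4)).
  { apply (geq_end (geq_sym E4)). apply wpath_app. exists (lend s3). split; auto. apply path_single; auto. }
  assert (Hend : lend s4 = u) by (eapply wpath_det; eauto). clear Pa2.
  assert (Ec : geq om xc (xa ++ [Elt u a1; s2])).
  { eapply geq_trans; [apply E2|]. eapply geq_ext; [exact E1|exact Pb|apply path_single; auto]. }
  assert (Ed : geq om xd (xa ++ [Elt u a1; s2; s3])).
  { eapply geq_trans; [apply E3|]. pose proof (geq_app_r Ec Pc (path_single (u := lend s2) s3 (eq_sym h3))) as H.
    rewrite <- app_assoc in H. apply H. }
  assert (Em : geq om xa (xa ++ [Elt u a1; s2; s3; s4])).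
  { eapply geq_trans; [apply E4|]. pose proof (geq_app_r Ed Pd (path_single (u := lend s3) s4 (eq_sym h4))) as H.
    rewrite <- app_assoc in H. apply H. }
  assert (Pw : wpath u [Elt u a1; s2; s3; s4] u).
  { apply wpath_cons. split; auto. apply wpath_cons. split; [simpl; auto|].
    apply wpath_cons. split; auto. rewrite <- Hend. apply path_single; auto. }
  assert (Eq : F u [] = F u [Elt u a1; s2; s3; s4]).
  { apply (cancel (om := om) (xs := xa) (u := u)); auto. rewrite app_nil_r. auto. apply wpath_nil; auto. }
  assert (Par := F_eq_parity (wnil u) Pw Eq).
  assert (Edg := f_equal (@edgesN G) Eq). rewrite edges_nil, edges_Elt_cons in Edg.
  destruct (gen_cases g2) as [[e [-> He]]|[i2 [a2 [-> [Ha2 na2]]]]].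
  -
    subst u. cbn [lend lstart] in *.
    destruct (gen_cases g3) as [[f' [-> Hf']]|[i3 [a3 [-> [Ha3 na3]]]]].
    + exfalso. destruct (classic (f' = bar e)) as [->|nf'].
      * apply n6. apply geq_sym. eapply geq_trans; [apply E3|].
        eapply geq_trans. eapply geq_ext; [exact E2|exact Pc|apply path_single; auto].
        change [Arr e; Arr (bar e)] with [Arr e; linv (Arr e)]. eapply geq_cancel_inv; eauto.
      * destruct (gen_cases g4) as [[h [-> _]]|[i4 [a4 [-> _]]]]; [simpl in Par; discriminate|].
        rewrite (edges_AAE (proj2 (proj1 (wpath_cons _ _ _ _) Pw)) nf') in Edg. discriminate.
    + destruct (gen_cases g4) as [[f [-> Hf]]|[i4 [a4 [-> _]]]]; [|exfalso; simpl in Par; discriminate].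
      assert (PX : wpath (tgt e) [Elt (tgt e) a3; Arr f] (src e)).
      { apply wpath_cons. split; auto. simpl. rewrite <- Hend. apply path_single. simpl; auto. }
      assert (EX : edgesN (F (src e) [Elt (tgt e) a3; Arr f]) = [f]).
      { rewrite edges_Elt_cons. apply (edges_A1 (proj2 (proj1 (wpath_cons _ _ _ _) PX))). }
      rewrite F_cons in Edg.
      destruct (arr_edges e (F_LV PX)) as [[_ E5]|[Htb E5]].
      * exfalso. rewrite E5 in Edg. discriminate.
      * rewrite EX in E5. injection E5; intros _ Hfe. subst f.
        destruct (act_Arr_nend (bar e) (gone : GV G (src e)) (eq_sym Hend)) as [r0 Hr0].
        unfold F in Htb. cbn [fold] in Htb. unfold base in Htb. rewrite Hr0 in Htb. rewrite act_Elt_loc in Htb. simpl in Htb.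
        destruct Htb as [_ Hrep]. apply rep_one_iff in Hrep. destruct Hrep as [k Hk]. rewrite gmulg1 in Hk.
        set (k' := castG (Ge_bar G e) k).
        assert (Hk' : iota_bar e k' = a3).
        { unfold iota_bar, k'. rewrite castG_trans, castG_refl. auto. }
        rewrite <- Hk' in Em.
        assert (Pxa1 : wpath om (xa ++ [Elt (src e) a1]) (src e)).
        { apply wpath_app. exists (src e). split; auto. apply path_single; auto. }
        assert (S1 : geq om ((xa ++ [Elt (src e) a1]) ++ [Elt (src e) (iota e k'); Arr e] ++ [Arr (bar e)])
                           ((xa ++ [Elt (src e) a1]) ++ [Arr e; Elt (tgt e) (iota_bar e k')] ++ [Arr (bar e)])).
        { eapply geq_rel. constructor. apply wpath_app. exists (src e). split; auto.
          apply wpath_cons. split; auto. apply wpath_cons. split; auto. apply path_single. auto. }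
        assert (S2 : geq om ((xa ++ [Elt (src e) a1; Elt (src e) (iota e k')]) ++ [Arr e; Arr (bar e)] ++ [])
                           ((xa ++ [Elt (src e) a1; Elt (src e) (iota e k')]) ++ [] ++ [])).
        { eapply geq_rel. constructor. apply wpath_app. exists (src e). split.
          - apply wpath_app. exists (src e). split; auto. apply wpath_cons. split; auto. apply path_single; auto.
          - rewrite app_nil_r. apply wpath_cons. split; auto. apply path_single; auto. }
        rewrite <- !app_assoc in S1, S2. cbn [app] in S1, S2.
        assert (E6 : geq om (xa ++ []) (xa ++ [Elt (src e) a1; Elt (src e) (iota e k')])).
        { rewrite app_nil_r. eapply geq_trans; [apply Em|]. eapply geq_trans; [apply geq_sym; apply S1|]. exact S2. }
        assert (Eq2 : F (src e) [] = F (src e) [Elt (src e) a1; Elt (src e) (iota e k')]).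
        { apply (cancel (om := om) (xs := xa) (u := src e)); auto. apply wpath_nil; auto.
          apply wpath_cons. split; auto. apply path_single; auto. }
        rewrite F_EE in Eq2. apply nend_inj in Eq2. rewrite gmulg1 in Eq2. symmetry in Eq2.
        apply mul_eq_one_l in Eq2. rewrite <- (hom_inv (iota_hom G e)) in Eq2.
        set (k0 := ginv k') in *.
        assert (nk0 : k0 <> gone).
        { intro H0. apply na1. rewrite Eq2, H0. apply (hom_one (iota_hom G e)). }
        destruct (graphical_factor (iota_graphical G e) A nk0) as [A' [HA' HAe]].
        { rewrite <- Eq2. auto. }
        assert (Hb3 : fac (Gv (tgt e)) i3 (iota_bar e k0)).
        { unfold k0. rewrite (hom_inv (iota_bar_hom G e)), Hk'. apply fac_inv; auto. }
        destruct (graphical_factor (iota_bar_graphical e) i3 nk0 Hb3) as [A'' [HA'' HCe]].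
        assert (A'' = A') by (eapply fac_uniq; eauto). subst A''.
        exists (tgt e), i3. split.
        -- split; auto. split; auto. exists a3. auto.
        -- exists (gcons e (gnil (tgt e))). intro b. simpl. unfold phi_e. split.
           ++ intros [_ [g [Hg Hgb]]]. apply HAe in Hg. destruct Hg as [y [Hy Hyg]].
              apply iota_inj in Hyg. subst y. apply HCe. exists g. auto.
           ++ intro Hb. split.
              ** intros x Hx. apply HAe in Hx. destruct Hx as [y [_ Hy]]. eauto.
              ** apply HCe in Hb. destruct Hb as [y [Hy Hyb]]. exists y. split; auto.
                 apply HAe. exists y. auto.
  -
    cbn [lend lstart] in *.
    destruct (gen_cases g3) as [[e [-> He]]|[i3 [a3 [-> [Ha3 na3]]]]].
    + exfalso. cbn [lend lstart] in *.
      destruct (gen_cases g4) as [[f [-> Hf]]|[i4 [a4 [-> _]]]]; [|simpl in Par; discriminate].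
      destruct (classic (f = bar e)) as [->|nf].
      * apply n5. eapply geq_trans; [apply E4|].
        eapply geq_trans. eapply geq_ext; [exact E3|exact Pd|apply path_single; auto].
        change [Arr e; Arr (bar e)] with [Arr e; linv (Arr e)]. eapply geq_cancel_inv; eauto.
      * rewrite edges_Elt_cons in Edg.
        rewrite (edges_AA (proj2 (proj1 (wpath_cons _ _ _ _) (proj2 (proj1 (wpath_cons _ _ _ _) Pw)))) nf) in Edg.
        discriminate.
    + cbn [lend lstart] in *.
      destruct (gen_cases g4) as [[f [-> _]]|[i4 [a4 [-> [Ha4 na4]]]]]; [exfalso; simpl in Par; discriminate|].
      unfold F, base in Eq. cbn [fold] in Eq. rewrite !act_Elt_nend in Eq.
      apply nend_inj in Eq. rewrite gmulg1, !gmulA in Eq. symmetry in Eq.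
      assert (n2A : i2 <> A).
      { intro; subst i2. eapply comb; [exact Ec|exact Pa|exact Vc|exact Ha1|exact Ha2|exact n5|exact na]. }
      assert (n4A : i4 <> A).
      { intro; subst i4.
        assert (Eb : geq om xb (xd ++ [Elt u a4; Elt u a1])).
        { eapply geq_trans; [apply E1|]. eapply geq_ext; [exact E4|exact Pa|apply path_single; auto]. }
        eapply comb; [exact Eb|exact Pd|exact Vb|exact Ha4|exact Ha1| |].
        - intro H. apply n6. apply geq_sym. auto.
        - intro H. apply nb. apply adj_sym. auto. }
      assert (i3 = A) by (eapply fac_four; [exact Ha1|exact Ha2|exact Ha3|exact Ha4|auto|auto|auto|exact Eq]).
      subst i3. exists u, A. split; [|apply RR_refl].
      split; auto. split; auto. exists a3. auto.
Qed.
End Opp.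


Section Final.
Variable G : RAGoG.
Variable om : V G.

Lemma lab_Lab p u (A : vI (Gv u)) : labelled_factor om p u A -> Lab om (fst p) (snd p) u A.
Proof. intro H. apply lab_iff in H. destruct H as [H|H]; auto. apply Lab_flip. auto. Qed.

Lemma Lab_lab p u (A : vI (Gv u)) : Lab om (fst p) (snd p) u A -> labelled_factor om p u A.
Proof. intro H. apply lab_iff. auto. Qed.

Lemma same_edge_sym p q : same_edge om p q -> same_edge om q p.
Proof.
  intros [[H1 H2]|[H1 H2]]; [left|right]; split; apply geq_sym; auto.
Qed.

Lemma se_lab p q u (A : vI (Gv u)) : same_edge om p q -> labelled_factor om p u A -> labelled_factor om q u A.
Proof.
  intros S H. apply lab_Lab in H. apply Lab_lab.
  destruct S as [[H1 H2]|[H1 H2]].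
  - eapply Lab_geq; eauto.
  - apply Lab_flip. eapply Lab_geq; eauto.
Qed.

Lemma tri_sym p q : in_triangle_rel om p q -> in_triangle_rel om q p.
Proof.
  intros [a [b [c [H1 [H2 [H3 [n1 [n2 [n3 [Hp Hq]]]]]]]]]].
  exists a, b, c. tauto.
Qed.

Lemma opp_sym p q : opposite_rel om p q -> opposite_rel om q p.
Proof.
  intros [a [b [c [d [H1 [H2 [H3 [H4 [na [nb [n1 [n2 [n3 [n4 [n5 [n6 [Hp Hq]]]]]]]]]]]]]]]]].
  exists c, d, a, b.
  refine (conj H3 (conj H4 (conj H1 (conj H2 (conj _ (conj _ (conj n3 (conj n4 (conj n1 (conj n2 (conj _ (conj _ (conj Hq Hp))))))))))))).
  - intro H. apply na. apply adj_sym. auto.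
  - intro H. apply nb. apply adj_sym. auto.
  - intro H. apply n5. apply geq_sym. auto.
  - intro H. apply n6. apply geq_sym. auto.
Qed.

Lemma BL p q u (A : vI (Gv u)) :
  (same_edge om p q \/ in_triangle_rel om p q \/ opposite_rel om p q) ->
  labelled_factor om p u A -> exists w (C : vI (Gv w)), labelled_factor om q w C /\ RR u A w C.
Proof.
  intros [S|[T|O]] H.
  - exists u, A. split; [eapply se_lab; eauto|apply RR_refl].
  - destruct T as [a [b [c [H1 [H2 [H3 [n1 [n2 [n3 [Hp Hq]]]]]]]]]].
    destruct (tri H1 H2 H3 n1 n2 n3) as [v [C [L1 [L2 L3]]]].
    exists v, C. split.
    + destruct Hq as [Hq|[Hq|Hq]]; apply same_edge_sym in Hq; eapply se_lab; eauto; apply Lab_lab; simpl; auto.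
    + destruct Hp as [Hp|[Hp|Hp]]; apply (se_lab Hp) in H; apply lab_Lab in H; simpl in H;
        eapply Lab_uniq; eauto.
  - destruct O as [a [b [c [d [H1 [H2 [H3 [H4 [na [nb [n1 [n2 [n3 [n4 [n5 [n6 [Hp Hq]]]]]]]]]]]]]]]]].
    apply (se_lab Hp) in H. apply lab_Lab in H. simpl in H.
    destruct (opp H1 H2 H3 H4 na nb n1 n2 n3 n4 n5 n6 H) as [w [C [L R]]].
    exists w, C. split; auto. apply same_edge_sym in Hq. eapply se_lab; eauto. apply Lab_lab. simpl. auto.
Qed.

Definition Qrel p q :=
  (forall u (A : vI (Gv u)), labelled_factor om p u A -> exists w (C : vI (Gv w)), labelled_factor om q w C /\ RR u A w C) /\
  (forall w (C : vI (Gv w)), labelled_factor om q w C -> exists u (A : vI (Gv u)), labelled_factor om p u A /\ RR w C u A).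

Lemma chain p q : same_hyperplane om p q -> Qrel p q.
Proof.
  intro H. induction H as [p q Hs|p|p q _ [IH1 IH2]|p q r _ [IH1 IH2] _ [IH3 IH4]].
  - destruct Hs as [_ [_ Hs]]. split.
    + intros u A Hl. eapply BL; eauto.
    + intros w C Hl. eapply BL; eauto.
      destruct Hs as [S|[T|O]]; [left; apply same_edge_sym; auto|right; left; apply tri_sym; auto|right; right; apply opp_sym; auto].
  - split; intros; eexists; eexists; split; eauto; apply RR_refl.
  - split; auto.
  - split.
    + intros u A Hl. destruct (IH1 u A Hl) as [w [C [L1 R1]]]. destruct (IH3 w C L1) as [k [D [L2 R2]]].
      exists k, D. split; auto. eapply RR_trans; eauto.
    + intros u A Hl. destruct (IH4 u A Hl) as [w [C [L1 R1]]]. destruct (IH2 w C L1) as [k [D [L2 R2]]].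
      exists k, D. split; auto. eapply RR_trans; eauto.
Qed.

End Final.

Theorem lemma4p10 (G : RAGoG) (om : V G)
    (p q : list (letter G) * list (letter G))
    (u v : V G) (A : vI (Gv u)) (B : vI (Gv v)) :
  labelled_factor om p u A ->
  labelled_factor om q v B ->
  same_hyperplane om p q ->
  exists gam : gpath u v,
    forall b : Gv v, phi_path gam (fac (Gv u) A) b <-> fac (Gv v) B b.
Proof.
  intros Hp Hq Hh. destruct (chain Hh) as [H _]. destruct (H u A Hp) as [w [C [L R]]].
  assert (R2 : RR w C v B) by (eapply Lab_uniq; apply lab_Lab; eauto).
  exact (RR_trans R R2).
Qed.
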